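(* For a Banach algebra $A$ the following are equivalent: (i) $A$ is approximately semi-contractible; (ii) $A$ is approximately semi-amenable; (iii) $A$ is weak$^*$-approximately semi-amenable.
   Context: For a Banach algebra $A$ and Banach $A$-bimodule $X$, a derivation is a linear map $D$ from $A$ into a bimodule with $D(ab)=a\cdot D(b)+D(a)\cdot b$; $X^*$ is a Banach $A$-bimodule via $\langle a\cdot f,x\rangle=\langle f,x\cdot a\rangle$, $\langle f\cdot a,x\rangle=\langle f,a\cdot x\rangle$. A continuous derivation $D:A\to Y$ ($Y$ a Banach $A$-bimodule) is approximately semi-inner if there are nets $(\xi_i),(\eta_i)$ in $Y$ with $D(a)=\lim_i(a\cdot\xi_i-\eta_i\cdot a)$ in norm for every $a\in A$. $A$ is approximately semi-contractible if for every Banach $A$-bimodule $X$ every continuous derivation $A\to X$ is approximately semi-inner; approximately semi-amenable if for every $X$ every continuous derivation $A\to X^*$ is approximately semi-inner; weak$^*$-approximately semi-amenable if for every $X$ and every continuous derivation $D:A\to X^*$ there are nets $(f_i),(g_i)$ in $X^*$ with $a\cdot f_i-g_i\cdot a\to D(a)$ weak$^*$ for every $a\in A$. *)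

(* Defs.v *)
From mathcomp Require Import all_boot all_algebra.
From mathcomp Require Import all_classical all_reals all_analysis.
Import GRing.Theory Num.Theory.
Import numFieldNormedType.Exports.
From mathcomp Require Export complex.

Set Implicit Arguments.
Unset Strict Implicit.
Unset Printing Implicit Defensive.

Local Open Scope ring_scope.

Definition directed_set (I : Type) (le : I -> I -> Prop) : Prop :=
  [/\ inhabited I, (forall i, le i i),
      (forall i j k, le i j -> le j k -> le i k) &
      (forall i j, exists k, le i k /\ le j k)].

Section BanachDefs.
Variable R : realType.
Local Notation K := (R[i]).

Record banach_algebra (A : completeNormedModType K) := BanachAlgebra {
  amul : A -> A -> A;
  amulDl : forall a b c, amul (a + b) c = amul a c + amul b c;
  amulDr : forall a b c, amul a (b + c) = amul a b + amul a c;
  amulZl : forall (k : K) a b, amul (k *: a) b = k *: amul a b;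
  amulZr : forall (k : K) a b, amul a (k *: b) = k *: amul a b;
  amulA : forall a b c, amul a (amul b c) = amul (amul a b) c;
  amul_norm : forall a b, `|amul a b| <= `|a| * `|b| }.

Record banach_bimodule (A : completeNormedModType K) (BA : banach_algebra A)
    (X : completeNormedModType K) := BanachBimodule {
  lact : A -> X -> X;
  ract : X -> A -> X;
  lactDl : forall a b x, lact (a + b) x = lact a x + lact b x;
  lactDr : forall a x y, lact a (x + y) = lact a x + lact a y;
  lactZl : forall (k : K) a x, lact (k *: a) x = k *: lact a x;
  lactZr : forall (k : K) a x, lact a (k *: x) = k *: lact a x;
  ractDl : forall x y a, ract (x + y) a = ract x a + ract y a;
  ractDr : forall x a b, ract x (a + b) = ract x a + ract x b;
  ractZl : forall (k : K) x a, ract (k *: x) a = k *: ract x a;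
  ractZr : forall (k : K) x a, ract x (k *: a) = k *: ract x a;
  lactA : forall a b x, lact (amul BA a b) x = lact a (lact b x);
  ractA : forall x a b, ract x (amul BA a b) = ract (ract x a) b;
  lractA : forall a x b, ract (lact a x) b = lact a (ract x b);
  lact_bounded : exists C : K, forall a x, `|lact a x| <= C * `|a| * `|x|;
  ract_bounded : exists C : K, forall x a, `|ract x a| <= C * `|x| * `|a| }.

Variables (A : completeNormedModType K) (BA : banach_algebra A).

Definition net_norm_cvg (I : Type) (le : I -> I -> Prop)
    (V : normedModType K) (u : I -> V) (l : V) : Prop :=
  forall e : K, 0 < e -> exists i0, forall i, le i0 i -> `|u i - l| < e.

Definition derivation (X : completeNormedModType K)
    (M : banach_bimodule BA X) (D : A -> X) : Prop :=
  [/\ (forall a b, D (a + b) = D a + D b),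
      (forall (k : K) a, D (k *: a) = k *: D a) &
      (forall a b, D (amul BA a b) = lact M a (D b) + ract M (D a) b)].

Definition approx_semi_inner (X : completeNormedModType K)
    (M : banach_bimodule BA X) (D : A -> X) : Prop :=
  exists (I : Type) (le : I -> I -> Prop) (xi eta : I -> X),
    directed_set le /\
    forall a, net_norm_cvg le (fun i => lact M a (xi i) - ract M (eta i) a) (D a).

(** ---- The dual bimodule X^star, written out on functions X -> K. ---- *)

Definition dual_elem (X : completeNormedModType K) (f : X -> K) : Prop :=
  [/\ (forall x y, f (x + y) = f x + f y),
      (forall (k : K) x, f (k *: x) = k * f x) &
      continuous (f : X -> K^o)].

Definition dlact (X : completeNormedModType K) (M : banach_bimodule BA X)
    (a : A) (f : X -> K) : X -> K := fun x => f (ract M x a).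
Definition dract (X : completeNormedModType K) (M : banach_bimodule BA X)
    (f : X -> K) (a : A) : X -> K := fun x => f (lact M a x).

Definition dual_norm_le (X : completeNormedModType K) (f : X -> K) (e : K) : Prop :=
  forall x, `|f x| <= e * `|x|.

Definition dual_derivation (X : completeNormedModType K)
    (M : banach_bimodule BA X) (D : A -> X -> K) : Prop :=
  [/\ (forall a, dual_elem (D a)),
      (forall a b x, D (a + b) x = D a x + D b x),
      (forall (k : K) a x, D (k *: a) x = k * D a x) &
      (forall a b x, D (amul BA a b) x = dlact M a (D b) x + dract M (D a) b x)].

Definition dual_continuous (X : completeNormedModType K) (D : A -> X -> K) : Prop :=
  forall a, forall e : K, 0 < e -> exists2 d : K, 0 < d &
    forall b, `|b - a| < d -> dual_norm_le (fun x => D b x - D a x) e.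

Definition dual_approx_semi_inner (X : completeNormedModType K)
    (M : banach_bimodule BA X) (D : A -> X -> K) : Prop :=
  exists (I : Type) (le : I -> I -> Prop) (f g : I -> X -> K),
    [/\ directed_set le, (forall i, dual_elem (f i) /\ dual_elem (g i)) &
    forall a (e : K), 0 < e -> exists i0, forall i, le i0 i ->
      dual_norm_le (fun x => (dlact M a (f i) x - dract M (g i) a x) - D a x) e].

Definition dual_wstar_approx_semi_inner (X : completeNormedModType K)
    (M : banach_bimodule BA X) (D : A -> X -> K) : Prop :=
  exists (I : Type) (le : I -> I -> Prop) (f g : I -> X -> K),
    [/\ directed_set le, (forall i, dual_elem (f i) /\ dual_elem (g i)) &
    forall a x (e : K), 0 < e -> exists i0, forall i, le i0 i ->
      `|(dlact M a (f i) x - dract M (g i) a x) - D a x| < e].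

Definition approx_semi_contractible : Prop :=
  forall (X : completeNormedModType K) (M : banach_bimodule BA X) (D : A -> X),
    derivation M D -> continuous D -> approx_semi_inner M D.

Definition approx_semi_amenable : Prop :=
  forall (X : completeNormedModType K) (M : banach_bimodule BA X) (D : A -> X -> K),
    dual_derivation M D -> dual_continuous D -> dual_approx_semi_inner M D.

Definition wstar_approx_semi_amenable : Prop :=
  forall (X : completeNormedModType K) (M : banach_bimodule BA X) (D : A -> X -> K),
    dual_derivation M D -> dual_continuous D -> dual_wstar_approx_semi_inner M D.

End BanachDefs.

(* Main.v *)
From HB Require Import structures.
Require Import Defs.
From mathcomp Require Import all_boot all_order all_algebra.
From mathcomp Require Import all_classical all_reals all_analysis.
From mathcomp Require Import complex.
From mathcomp Require Import ring lra.
Set Implicit Arguments.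
Unset Strict Implicit.
Unset Printing Implicit Defensive.
Import Order.TTheory GRing.Theory Num.Theory.
Import numFieldNormedType.Exports.
Local Open Scope ring_scope.
Local Open Scope classical_set_scope.
Local Open Scope complex_scope.

Section HB.
Variable R : realType.
Local Notation K := (R[i]).
Variable V : lmodType K.
Variable p : V -> R.
Hypothesis pD : forall u v, p (u + v) <= p u + p v.
Hypothesis pZ : forall (t : R) v, 0 <= t -> p (t%:C *: v) = t * p v.

Definition glin (G : set (V * R)) :=
  (forall v1 r1 v2 r2, G (v1, r1) -> G (v2, r2) -> G (v1 + v2, r1 + r2)) /\
  (forall v r (t : R), G (v, r) -> G (t%:C *: v, t * r)).
Definition gdom (G : set (V * R)) := forall v r, G (v, r) -> r <= p v.

Lemma p0 : p 0 = 0.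
Proof. by rewrite -(scale0r (0 : V)) -[0 : K]/((0 : R)%:C) pZ // mul0r. Qed.

Lemma scaleC_comp (s t : R) (v : V) : s%:C *: (t%:C *: v) = (s * t)%:C *: v.
Proof. by rewrite scalerA -rmorphM. Qed.

Lemma gfun G v r r' : glin G -> gdom G -> G (v, r) -> G (v, r') -> r = r'.
Proof.
move=> [Gadd Gsc] Gd H1 H2.
have H3 := Gadd _ _ _ _ H1 (Gsc _ _ (-1) H2).
have H4 := Gadd _ _ _ _ H2 (Gsc _ _ (-1) H1).
move: (Gd _ _ H3) (Gd _ _ H4).
rewrite rmorphN1 !scaleN1r !subrr p0 !mulN1r !subr_le0 => a b.
by apply/eqP; rewrite eq_le a b.
Qed.

Definition gext (G : set (V * R)) (x0 : V) (c : R) : set (V * R) :=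
  [set vr | exists v r (t : R), G (v, r) /\ vr = (v + t%:C *: x0, r + t * c)].

Lemma gext_lin G x0 c : glin G -> glin (gext G x0 c).
Proof.
move=> [Gadd Gsc]; split.
- move=> v1 r1 v2 r2 [w1 [s1 [t1 [G1 [-> ->]]]]] [w2 [s2 [t2 [G2 [-> ->]]]]].
  exists (w1 + w2), (s1 + s2), (t1 + t2); split; first exact: Gadd.
  congr (_, _); last by rewrite mulrDl; lra.
  by rewrite rmorphD scalerDl; rewrite !addrA; congr (_ + _); rewrite -!addrA; congr (_ + _); rewrite addrC.
- move=> v r t [w [s [u [Gw [-> ->]]]]].
  exists (t%:C *: w), (t * s), (t * u); split; first exact: Gsc.
  by rewrite scalerDr scaleC_comp mulrDr mulrA.
Qed.

Lemma gext_dom G x0 c : glin G -> gdom G ->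
  (forall v r, G (v, r) -> r - p (v - x0) <= c) ->
  (forall v r, G (v, r) -> c <= p (v + x0) - r) ->
  gdom (gext G x0 c).
Proof.
move=> [Gadd Gsc] Gd c1 c2 v r [w [s [t [Gw E]]]]; case: E => -> ->.
have [t0|t0|->] := ltgtP t 0; last first.
- by rewrite scale0r addr0 mul0r addr0; exact: Gd.
-
  have ti : 0 <= t^-1 by rewrite invr_ge0 ltW.
  have := c2 _ _ (Gsc _ _ t^-1 Gw).
  have -> : t^-1%:C *: w + x0 = t^-1%:C *: (w + t%:C *: x0).
    by rewrite scalerDr scaleC_comp mulVf ?gt_eqF // rmorph1 scale1r.
  rewrite pZ // => h.
  have hc : c <= t^-1 * (p (w + t%:C *: x0) - s) by rewrite mulrBr.
  have h2 := ler_wpM2l (ltW t0) hc.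
  rewrite mulrA mulfV ?gt_eqF // mul1r in h2; lra.
-
  set u := - t; have u0 : 0 < u by rewrite /u; lra.
  have ui : 0 <= u^-1 by rewrite invr_ge0 ltW.
  have := c1 _ _ (Gsc _ _ u^-1 Gw).
  have -> : u^-1%:C *: w - x0 = u^-1%:C *: (w + t%:C *: x0).
    have ut : u^-1 * t = -1 by rewrite /u invrN mulNr mulVf ?lt_eqF.
    by rewrite scalerDr scaleC_comp ut rmorphN1 scaleN1r.
  rewrite pZ // => h.
  have hc : u^-1 * (s - p (w + t%:C *: x0)) <= c by rewrite mulrBr.
  have h2 := ler_wpM2l (ltW u0) hc.
  rewrite mulrA mulfV ?gt_eqF // mul1r /u in h2; lra.
Qed.

Theorem hahn_banach (G0 : set (V * R)) :
  glin G0 -> gdom G0 -> G0 (0, 0) ->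
  exists G, [/\ G0 `<=` G, glin G, gdom G & forall v, exists r, G (v, r)].
Proof.
move=> lin0 dom0 G00.
pose P := fun G : set (V * R) => G = set0 \/ [/\ G0 `<=` G, glin G & gdom G].
have [A [PA Amax]] : exists A, P A /\ forall B, A `<` B -> ~ P B.
  apply: Zorn_bigcup => F FP Ftot.
  have [[G FG Gn0]|] := pselect (exists2 G, F G & G !=set0); last first.
    move=> nF; left; apply/seteqP; split => // x [G FG Gx].
    by apply: nF; exists G => //; exists x.
  have good H : F H -> H !=set0 -> [/\ G0 `<=` H, glin H & gdom H].
    by move=> FH Hn0; case: (FP _ FH) => // H0; move: Hn0; rewrite H0 => -[].
  have [G0G linG domG] := good _ FG Gn0.
  right; split.
  - by move=> x /G0G Gx; exists G.
  - split.
    + move=> v1 r1 v2 r2 [H1 FH1 H1v] [H2 FH2 H2v].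
      have [g1 l1 d1] := good _ FH1 (ex_intro _ _ H1v).
      have [g2 l2 d2] := good _ FH2 (ex_intro _ _ H2v).
      case: (Ftot _ _ FH1 FH2) => sub.
      * by exists H2 => //; apply: l2.1 => //; apply: sub.
      * by exists H1 => //; apply: l1.1 => //; apply: sub.
    + move=> v r t [H FH Hv]; have [g l d] := good _ FH (ex_intro _ _ Hv).
      by exists H => //; apply: l.2.
  - move=> v r [H FH Hv]; have [g l d] := good _ FH (ex_intro _ _ Hv).
    exact: d.
have [A0|[G0A linA domA]] := PA.
  exfalso; apply: (Amax G0); last by right; split.
  by rewrite A0; split => // /(_ (0, 0) G00).
exists A; split => // x0; apply/not_existsP => nx0.
pose S := [set y | exists v r, A (v, r) /\ y = r - p (v - x0)].
have A00 : A (0, 0) by apply: G0A.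
have Sub : forall v r, A (v, r) -> forall y, S y -> y <= p (v + x0) - r.
  move=> v r Avr y [v' [r' [Av' ->]]].
  have := domA _ _ (linA.1 _ _ _ _ Avr Av').
  have := pD (v + x0) (v' - x0).
  have -> : v + x0 + (v' - x0) = v + v' by rewrite addrACA subrr addr0.
  move=> h1 h2; lra.
have hS : has_sup S.
  split; first by exists (0 - p (0 - x0)), 0, 0.
  by exists (p (0 + x0) - 0) => y Sy; apply: Sub A00 _ Sy.
pose c := sup S.
have c1 : forall v r, A (v, r) -> r - p (v - x0) <= c.
  by move=> v r Avr; apply: sup_upper_bound => //; exists v, r.
have c2 : forall v r, A (v, r) -> c <= p (v + x0) - r.
  move=> v r Avr; apply: ge_sup; first by exists (0 - p (0 - x0)), 0, 0.
  by move=> y Sy; apply: Sub Avr _ Sy.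
apply: (Amax (gext A x0 c)); last first.
  right; split.
  - move=> vr /G0A Avr; exists vr.1, vr.2, 0; split; first by case: vr Avr.
    by rewrite scale0r addr0 mul0r addr0; case: vr Avr.
  - exact: gext_lin.
  - exact: gext_dom.
split.
  move=> [v r] Avr; exists v, r, 0; split => //.
  by rewrite scale0r addr0 mul0r addr0.
move=> sub; apply: (nx0 c); apply: sub.
exists 0, 0, 1; split => //.
by rewrite rmorph1 scale1r add0r mul1r add0r.
Qed.

End HB.

Section KHelp.
Variable R : realType.
Local Notation K := (R[i]).

Lemma ge0K (z : K) : 0 <= z -> z = (complex.Re z)%:C.
Proof. by case: z => a b; rewrite lecE /= => /andP[/eqP -> _]. Qed.

Lemma gt0K (z : K) : 0 < z -> 0 < complex.Re z /\ z = (complex.Re z)%:C.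
Proof. by case: z => a b; rewrite ltcE /= => /andP[/eqP -> h]. Qed.

Lemma CD (a b : R) : (a + b)%:C = a%:C + b%:C :> K.
Proof. exact: rmorphD. Qed.
Lemma CM (a b : R) : (a * b)%:C = a%:C * b%:C :> K.
Proof. exact: rmorphM. Qed.
Lemma CN (a : R) : (- a)%:C = - a%:C :> K.
Proof. exact: rmorphN. Qed.
Lemma CB (a b : R) : (a - b)%:C = a%:C - b%:C :> K.
Proof. exact: rmorphB. Qed.
Lemma CV (a : R) : (a^-1)%:C = (a%:C)^-1 :> K.
Proof. exact: fmorphV. Qed.
Lemma C0 : (0 : R)%:C = 0 :> K. Proof. by []. Qed.
Lemma C1 : (1 : R)%:C = 1 :> K. Proof. by []. Qed.

Definition rn {V : normedZmodType K} (x : V) : R := complex.Re `|x|.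

Lemma rnE {V : normedZmodType K} (x : V) : `|x| = (rn x)%:C.
Proof. by apply: ge0K; apply: normr_ge0. Qed.

Lemma rn_ge0 {V : normedZmodType K} (x : V) : 0 <= rn x.
Proof. by have := normr_ge0 x; rewrite rnE -[0 : K]/((0 : R)%:C) lecR. Qed.

Lemma rnD {V : normedZmodType K} (x y : V) : rn (x + y) <= rn x + rn y.
Proof. by rewrite -lecR CD -!rnE ler_normD. Qed.

Lemma rnN {V : normedZmodType K} (x : V) : rn (- x) = rn x.
Proof. by rewrite /rn normrN. Qed.

Lemma rnB {V : normedZmodType K} (x y : V) : rn (x - y) = rn (y - x).
Proof. by rewrite /rn distrC. Qed.

Lemma rn0 {V : normedZmodType K} : rn (0 : V) = 0.
Proof. by rewrite /rn normr0. Qed.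

Lemma rn_eq0 {V : normedZmodType K} (x : V) : rn x = 0 -> x = 0.
Proof. by move=> h; apply/normr0_eq0; rewrite rnE h. Qed.

Lemma rnZ {V : normedModType K} (k : K) (x : V) : rn (k *: x) = rn k * rn x.
Proof. by apply: complexI; rewrite CM -!rnE normrZ. Qed.

Lemma rnM (k l : K) : rn (k * l) = rn k * rn l.
Proof. by apply: complexI; rewrite CM -!rnE normrM. Qed.

Lemma rnC (r : R) : rn (r%:C) = `|r|.
Proof.
apply: complexI; rewrite -rnE.
have [r0|r0] := leP 0 r.
  by rewrite !ger0_norm ?ler0c.
rewrite !ltr0_norm ?rmorphN // ltcR //.
Qed.

Lemma rnCp (r : R) : 0 <= r -> rn (r%:C) = r.
Proof. by move=> r0; rewrite rnC ger0_norm. Qed.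

Lemma rn_i : rn ('i : K) = 1.
Proof.
apply: complexI; rewrite -rnE normc_def /= expr0n expr1n add0r sqrtr1 //.
Qed.

End KHelp.

Section Bounded.
Variable R : realType.
Local Notation K := (R[i]).
Variable X : completeNormedModType K.

Lemma bounded_continuous (f : X -> K) (C : R) :
  (forall x y, f (x + y) = f x + f y) ->
  (forall x, rn (f x) <= C * rn x) -> continuous (f : X -> K^o).
Proof.
move=> fD fC x; apply/cvgrPdist_lt => e e0.
have [er [ep ->]] : exists er, 0 < er /\ e = er%:C.
  by have [h1 h2] := gt0K e0; exists (complex.Re e).
apply/nbhs_normP; exists ((er / (`|C| + 1))%:C) => /=.
  by rewrite ltcR divr_gt0 // ltr_wpDl.
move=> y /=; rewrite rnE ltcR => hy.
have fB : f x - f y = f (x - y).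
  by have := fD (x - y) y; rewrite subrK => ->; rewrite addrK.
rewrite rnE ltcR fB.
have C1 : 0 < `|C| + 1 by rewrite ltr_wpDl.
apply: (le_lt_trans (fC _)).
apply: (le_lt_trans (y := (`|C| + 1) * rn (x - y))).
  apply: ler_wpM2r; first exact: rn_ge0.
  by apply: le_trans (ler_norm C) _; lra.
by rewrite mulrC -ltr_pdivlMr.
Qed.

Lemma dual_bounded (f : X -> K) : dual_elem f ->
  exists2 C : R, 0 < C & forall x, rn (f x) <= C * rn x.
Proof.
move=> [fD fZ fc].
have f0 : f 0 = 0 by rewrite -(scale0r (0 : X)) fZ mul0r.
have := fc 0; move/cvgrPdist_lt => /(_ 1 ltr01) /nbhs_norm0P [d /= d0 Hd].
have [dr [dp dE]] : exists dr, 0 < dr /\ d = dr%:C.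
  by have [h1 h2] := gt0K d0; exists (complex.Re d).
subst d.
exists (2 / dr); first by rewrite divr_gt0.
move=> x; have [->|x0] := eqVneq x 0; first by rewrite f0 !rn0 mulr0.
have nx : 0 < rn x.
  by rewrite lt_neqAle rn_ge0 andbT; apply/eqP => /esym /rn_eq0; apply/eqP.
pose q := dr / (2 * rn x).
have q0 : 0 < q by rewrite divr_gt0 // mulr_gt0.
have := Hd (q%:C *: x); rewrite /= rnE ltcR rnZ (rnCp (ltW q0)).
have -> : q * rn x = dr / 2 by rewrite /q; field; rewrite gt_eqF.
move=> /(_ ltac:(lra)); rewrite f0 sub0r rnE rnN fZ rnM (rnCp (ltW q0)).
rewrite -[1]/((1 : R)%:C) ltcR => h.
have -> : rn (f x) = (2 / dr * rn x) * (q * rn (f x)).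
  by rewrite /q; field; rewrite !gt_eqF.
rewrite -[X in _ <= X]mulr1; apply: ler_wpM2l; last exact: ltW.
by rewrite mulr_ge0 ?divr_ge0 ?rn_ge0 ?ltW.
Qed.

End Bounded.

Section Opn.
Variable R : realType.
Local Notation K := (R[i]).
Variable X : completeNormedModType K.

Definition opn (f : X -> K) : R := sup [set rn (f x) | x in [set x : X | rn x <= 1]].

Lemma dual0 (f : X -> K) : dual_elem f -> f 0 = 0.
Proof. by case=> _ fZ _; rewrite -(scale0r (0 : X)) fZ mul0r. Qed.

Lemma opn_has_sup (f : X -> K) : dual_elem f ->
  has_sup [set rn (f x) | x in [set x : X | rn x <= 1]].
Proof.
move=> fd; have [C C0 fC] := dual_bounded fd; split.
  by exists (rn (f 0)), 0 => //=; rewrite rn0 ler01.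
exists C => _ [x /= x1 <-]; apply: (le_trans (fC x)).
by rewrite -[X in _ <= X]mulr1 ler_wpM2l // ltW.
Qed.

Lemma opn_ge0 (f : X -> K) : dual_elem f -> 0 <= opn f.
Proof.
move=> fd; apply: (le_trans (rn_ge0 (f 0))).
by apply: sup_upper_bound; [exact: opn_has_sup | exists 0 => //=; rewrite rn0 ler01].
Qed.

Lemma opn_ub (f : X -> K) : dual_elem f -> forall x, rn (f x) <= opn f * rn x.
Proof.
move=> fd x; have [->|x0] := eqVneq x 0; first by rewrite dual0 // !rn0 mulr0.
have nx : 0 < rn x.
  by rewrite lt_neqAle rn_ge0 andbT; apply/eqP => /esym /rn_eq0; apply/eqP.
have ni : 0 <= (rn x)^-1 by rewrite invr_ge0 ltW.
have h : rn (f ((rn x)^-1%:C *: x)) <= opn f.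
  apply: sup_upper_bound; first exact: opn_has_sup.
  exists ((rn x)^-1%:C *: x) => //=.
  by rewrite rnZ rnCp // mulVf ?gt_eqF.
case: fd h => _ fZ _; rewrite fZ rnM rnCp // => h.
have -> : rn (f x) = rn x * ((rn x)^-1 * rn (f x)) by rewrite mulrA mulfV ?gt_eqF ?mul1r.
by rewrite mulrC ler_wpM2r // ltW.
Qed.

Lemma opn_le (f : X -> K) (e : R) : 0 <= e -> (forall x, rn (f x) <= e * rn x) ->
  opn f <= e.
Proof.
move=> e0 fe; apply: ge_sup; first by exists (rn (f 0)), 0 => //=; rewrite rn0 ler01.
move=> _ [x /= x1 <-]; apply: (le_trans (fe x)).
by rewrite -[X in _ <= X]mulr1 ler_wpM2l.
Qed.

End Opn.

Section DualT.
Variable R : realType.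
Local Notation K := (R[i]).
Variable X : completeNormedModType K.

Record dual := Dual { dfun :> X -> K; dualP : dual_elem dfun }.

HB.instance Definition _ := gen_eqMixin dual.
HB.instance Definition _ := gen_choiceMixin dual.

Lemma dual_eq (f g : dual) : (forall x, f x = g x) -> f = g.
Proof.
case: f g => f fP [g gP] /= fg; have ? := funext fg; subst g.
by congr Dual; exact: Prop_irrelevance.
Qed.

Lemma de_lin (f : X -> K) (C : R) :
  (forall x y, f (x + y) = f x + f y) ->
  (forall (k : K) x, f (k *: x) = k * f x) ->
  (forall x, rn (f x) <= C * rn x) -> dual_elem f.
Proof. by move=> fD fZ fC; split => //; exact: bounded_continuous fC. Qed.

Lemma de0 : dual_elem (fun _ : X => 0).
Proof.
by apply: (@de_lin _ 0) => [x y|k x|x]; rewrite ?addr0 ?mulr0 ?rn0 ?mul0r.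
Qed.

Lemma deD (f g : X -> K) : dual_elem f -> dual_elem g -> dual_elem (fun x => f x + g x).
Proof.
move=> fd gd; have [Cf _ fC] := dual_bounded fd; have [Cg _ gC] := dual_bounded gd.
case: (fd) => fD fZ _; case: (gd) => gD gZ _.
apply: (@de_lin _ (Cf + Cg)) => [x y|k x|x].
- by rewrite fD gD addrACA.
- by rewrite fZ gZ mulrDr.
- apply: (le_trans (rnD _ _)); rewrite mulrDl; exact: lerD.
Qed.

Lemma deZ (k : K) (f : X -> K) : dual_elem f -> dual_elem (fun x => k * f x).
Proof.
move=> fd; have [Cf _ fC] := dual_bounded fd; case: (fd) => fD fZ _.
apply: (@de_lin _ (rn k * Cf)) => [x y|l x|x].
- by rewrite fD mulrDr.
- by rewrite fZ mulrCA.
- by rewrite rnM -mulrA ler_wpM2l // rn_ge0.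
Qed.

Lemma deN (f : X -> K) : dual_elem f -> dual_elem (fun x => - f x).
Proof.
move=> fd; have := deZ (-1) fd.
by congr dual_elem; apply: funext => x; rewrite mulN1r.
Qed.

Definition dzero := Dual de0.
Definition dadd (f g : dual) := Dual (deD (dualP f) (dualP g)).
Definition dopp (f : dual) := Dual (deN (dualP f)).
Definition dscale (k : K) (f : dual) := Dual (deZ k (dualP f)).

Lemma daddA : associative dadd.
Proof. by move=> f g h; apply: dual_eq => x /=; rewrite addrA. Qed.
Lemma daddC : commutative dadd.
Proof. by move=> f g; apply: dual_eq => x /=; rewrite addrC. Qed.
Lemma dadd0 : left_id dzero dadd.
Proof. by move=> f; apply: dual_eq => x /=; rewrite add0r. Qed.
Lemma daddN : left_inverse dzero dopp dadd.
Proof. by move=> f; apply: dual_eq => x /=; rewrite addNr. Qed.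

HB.instance Definition _ := GRing.isZmodule.Build dual daddA daddC dadd0 daddN.

Lemma dscaleA a b (f : dual) : dscale a (dscale b f) = dscale (a * b) f.
Proof. by apply: dual_eq => x /=; rewrite mulrA. Qed.
Lemma dscale1 : left_id 1 dscale.
Proof. by move=> f; apply: dual_eq => x /=; rewrite mul1r. Qed.
Lemma dscaleDr : right_distributive dscale +%R.
Proof. by move=> a f g; apply: dual_eq => x /=; rewrite mulrDr. Qed.
Lemma dscaleDl (f : dual) : {morph dscale^~ f : a b / a + b}.
Proof. by move=> a b; apply: dual_eq => x /=; rewrite mulrDl. Qed.

HB.instance Definition _ := GRing.Zmodule_isLmodule.Build K dual
  dscaleA dscale1 dscaleDr dscaleDl.

Lemma daddE (f g : dual) x : (f + g) x = f x + g x. Proof. by []. Qed.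
Lemma doppE (f : dual) x : (- f) x = - f x. Proof. by []. Qed.
Lemma dzeroE x : (0 : dual) x = 0. Proof. by []. Qed.
Lemma dscaleE k (f : dual) x : (k *: f) x = k * f x. Proof. by []. Qed.
Lemma dsubE (f g : dual) x : (f - g) x = f x - g x. Proof. by []. Qed.

Definition dnorm (f : dual) : K := (opn f)%:C.

Lemma dnormD (f g : dual) : dnorm (f + g) <= dnorm f + dnorm g.
Proof.
rewrite /dnorm -CD lecR; apply: opn_le.
  by rewrite addr_ge0 // opn_ge0 //; exact: dualP.
move=> x; rewrite daddE; apply: (le_trans (rnD _ _)); rewrite mulrDl.
by apply: lerD; apply: opn_ub; exact: dualP.
Qed.

Lemma opnZ_le (k : K) (f : dual) : opn (k *: f) <= rn k * opn f.
Proof.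
apply: opn_le; first by rewrite mulr_ge0 ?rn_ge0 ?opn_ge0 //; exact: dualP.
move=> x; rewrite dscaleE rnM -mulrA ler_wpM2l ?rn_ge0 //.
by apply: opn_ub; exact: dualP.
Qed.

Lemma dnormZ (k : K) (f : dual) : dnorm (k *: f) = `|k| * dnorm f.
Proof.
rewrite /dnorm rnE -CM; congr (_%:C); apply/eqP; rewrite eq_le opnZ_le /=.
have [->|k0] := eqVneq k 0.
  by rewrite rn0 mul0r; apply: opn_ge0; exact: (dualP (0 *: f)).
have := opnZ_le k^-1 (k *: f); rewrite scalerA mulVf // scale1r => h.
have hk : rn k * rn k^-1 = 1 by rewrite -rnM mulfV // -C1 rnCp.
have kp : 0 < rn k.
  by rewrite lt_neqAle rn_ge0 andbT; apply/eqP => /esym /rn_eq0; apply/eqP.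
have := ler_wpM2l (rn_ge0 k) h; rewrite mulrA hk mul1r.
by [].
Qed.

Lemma dnorm0 (f : dual) : dnorm f = 0 -> f = 0.
Proof.
rewrite /dnorm -C0 => /complexI f0; apply: dual_eq => x; rewrite dzeroE.
apply: rn_eq0; apply/eqP; rewrite eq_le rn_ge0 andbT.
by have := opn_ub (dualP f) x; rewrite f0 mul0r.
Qed.

HB.instance Definition _ := Lmodule_isNormed.Build K dual dnormD dnormZ dnorm0.

Lemma dnormE (f : dual) : `|f| = (opn f)%:C. Proof. by []. Qed.

End DualT.

Section KComplete.
Variable R : realType.
Local Notation K := (R[i]).

Lemma rn_def (z : K) : rn z = Num.sqrt (complex.Re z ^+ 2 + complex.Im z ^+ 2).
Proof. by apply: complexI; rewrite -rnE normc_def. Qed.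

Lemma Re_le (z : K) : `|complex.Re z| <= rn z.
Proof.
rewrite rn_def -sqrtr_sqr; apply: ler_wsqrtr.
by rewrite lerDl sqr_ge0.
Qed.

Lemma Im_le (z : K) : `|complex.Im z| <= rn z.
Proof.
rewrite rn_def -sqrtr_sqr; apply: ler_wsqrtr.
by rewrite lerDr sqr_ge0.
Qed.

Lemma rn_le_ReIm (z : K) : rn z <= `|complex.Re z| + `|complex.Im z|.
Proof.
rewrite {1}[z]complexE; apply: (le_trans (rnD _ _)).
by rewrite rnM rn_i mul1r !rnC.
Qed.

Lemma K_complete (F : set_system K^o) : ProperFilter F -> cauchy F -> cvg F.
Proof.
move=> FF /cauchyP Fc.
have cRe : cvg ((@complex.Re R) @ F).
  apply: R_complete; apply/cauchyP => e e0.
  have [x Fx] := Fc e%:C ltac:(by rewrite ltcR).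
  exists (complex.Re x); apply: (@filterS _ F _ (ball x e%:C)); last exact: Fx.
  move=> y; rewrite /ball /= rnE ltcR => h.
  by apply: le_lt_trans h; rewrite -raddfB; apply: Re_le.
have cIm : cvg ((@complex.Im R) @ F).
  apply: R_complete; apply/cauchyP => e e0.
  have [x Fx] := Fc e%:C ltac:(by rewrite ltcR).
  exists (complex.Im x); apply: (@filterS _ F _ (ball x e%:C)); last exact: Fx.
  move=> y; rewrite /ball /= rnE ltcR => h.
  by apply: le_lt_trans h; rewrite -raddfB; apply: Im_le.
apply/cvg_ex; exists (lim ((@complex.Re R) @ F) +i* lim ((@complex.Im R) @ F)).
apply/cvgrPdist_lt => e e0.
have [er [ep eE]] : exists er, 0 < er /\ e = er%:C.
  by have [h1 h2] := gt0K e0; exists (complex.Re e).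
subst e.
have e2 : 0 < er / 2 by rewrite divr_gt0.
have hRe := (cvgrPdist_lt _ _).1 cRe (er / 2) e2.
have hIm := (cvgrPdist_lt _ _).1 cIm (er / 2) e2.
near=> z.
rewrite rnE ltcR; apply: (le_lt_trans (rn_le_ReIm _)).
have -> : er = er / 2 + er / 2 by field.
apply: ltrD; rewrite raddfB /=.
  by near: z; exact: hRe.
by near: z; exact: hIm.
Unshelve. all: by end_near.
Qed.

End KComplete.

Section DualComplete.
Variable R : realType.
Local Notation K := (R[i]).
Variable X : completeNormedModType K.

Lemma lim_le_dist {T} (F : set_system T) {FF : ProperFilter F} (u : T -> K^o) (l c : K^o) (r : R) :
  u @ F --> l -> (\forall t \near F, rn (c - u t) <= r) -> rn (c - l) <= r.
Proof.
move=> ul hF; apply/ler_addgt0Pr => e e0.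
have hl := (cvgrPdist_lt _ _).1 ul e%:C ltac:(by rewrite ltcR).
near F => t.
have h1 : rn (c - u t) <= r by near: t.
have h2 : `|l - u t| < e%:C by near: t; exact: hl.
rewrite rnE ltcR rnB in h2.
have := rnD (c - u t) (u t - l); rewrite addrA subrK => h3.
lra.
Unshelve. all: by end_near.
Qed.

Lemma dual_complete (F : set_system (dual X)) : ProperFilter F -> cauchy F -> cvg F.
Proof.
move=> FF /cauchyP Fc.
have FF0 : Filter F by exact: FF.
have ev x : cvg ((fun f : dual X => f x : K^o) @ F).
  apply: K_complete; apply/cauchyP => e e0.
  have [er [ep eE]] : exists er, 0 < er /\ e = er%:C.
    by have [h1 h2] := gt0K e0; exists (complex.Re e).
  subst e.
  have x1 : 0 < rn x + 1 by rewrite ltr_wpDl ?rn_ge0.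
  have [g Fg] := Fc ((er / (rn x + 1))%:C) ltac:(by rewrite ltcR divr_gt0).
  exists (g x); apply: (@filterS _ F _ (ball g (er / (rn x + 1))%:C)); last exact: Fg.
  move=> f; rewrite -ball_normE /= dnormE ltcR => h.
  rewrite -ball_normE /= rnE ltcR -dsubE.
  apply: (le_lt_trans (opn_ub (dualP (g - f)) x)).
  apply: (le_lt_trans (y := er / (rn x + 1) * rn x)).
    by apply: ler_wpM2r; [exact: rn_ge0 | exact: ltW].
  by rewrite mulrAC ltr_pdivrMr // ltr_pM2l // ltrDl.
pose L x := lim ((fun f : dual X => f x : K^o) @ F).
have Lc x : (fun f : dual X => f x : K^o) @ F --> L x := ev x.
have LD x y : L (x + y) = L x + L y.
  have h := cvgD (Lc x) (Lc y); have {}h := h FF0.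
  have e : (fun f : dual X => f (x + y) : K^o) = (fun f => f x + f y).
    by apply: funext => f; case: (dualP f) => fD _ _; rewrite fD.
  by rewrite /L e; exact: (cvg_lim _ h).
have LZ (k : K) x : L (k *: x) = k * L x.
  have h := @cvgMl_tmp _ _ F _ (fun f : dual X => f x : K^o) k (L x) (Lc x).
  have e : (fun f : dual X => f (k *: x) : K^o) = (fun f => k * f x).
    by apply: funext => f; case: (dualP f) => _ fZ _; rewrite fZ.
  by rewrite /L e; exact: (cvg_lim _ (h FF0)).
have near_ball (g : dual X) (r : R) : 0 <= r -> F (ball g r%:C) ->
    forall x, rn (g x - L x) <= r * rn x.
  move=> r0 Fg x; apply: (lim_le_dist (Lc x)).
  apply: (@filterS _ F _ (ball g r%:C)); last exact: Fg.
  move=> f; rewrite -ball_normE /= dnormE ltcR => h.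
  rewrite -dsubE; apply: (le_trans (opn_ub (dualP (g - f)) x)).
  by apply: ler_wpM2r; [exact: rn_ge0 | exact: ltW].
have [g Fg] := Fc 1 ltr01.
have gL := near_ball g 1 ler01 Fg.
have Ld : dual_elem L.
  apply: (@de_lin _ _ L (opn g + 1)) => // x.
  have := rnD (g x) (L x - g x); rewrite addrC subrK => h.
  apply: (le_trans h); rewrite mulrDl mul1r; apply: lerD.
    exact: (opn_ub (dualP g)).
  by rewrite rnB; have := gL x; rewrite mul1r.
apply/cvg_ex; exists (Dual Ld); apply/cvgrPdist_le => e e0.
have [er [ep eE]] : exists er, 0 < er /\ e = er%:C.
  by have [h1 h2] := gt0K e0; exists (complex.Re e).
subst e.
have e2 : 0 < er / 2 by rewrite divr_gt0.
have [h Fh] := Fc ((er / 2)%:C) ltac:(by rewrite ltcR).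
have hL := near_ball h (er / 2) (ltW e2) Fh.
apply: (@filterS _ F _ (ball h (er / 2)%:C)); last exact: Fh.
move=> f; rewrite -ball_normE /= dnormE ltcR => hf.
rewrite dnormE lecR; apply: opn_le; first exact: ltW.
move=> x; rewrite dsubE /=.
have := rnD (L x - h x) (h x - f x); rewrite addrA subrK => h1.
apply: (le_trans h1).
have -> : er * rn x = er / 2 * rn x + er / 2 * rn x by field.
apply: lerD; first by rewrite rnB; exact: hL.
rewrite -dsubE; apply: (le_trans (opn_ub (dualP (h - f)) x)).
by apply: ler_wpM2r; [exact: rn_ge0 | exact: ltW].
Qed.

HB.instance Definition _ := Uniform_isComplete.Build (dual X) dual_complete.

Definition dualC : completeNormedModType K := dual X.

End DualComplete.

Section DualModule.
Variable R : realType.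
Local Notation K := (R[i]).
Variables (A : completeNormedModType K) (BA : banach_algebra A).
Variables (X : completeNormedModType K) (M : banach_bimodule BA X).

Lemma bnd_real {V1 V2 V3 : normedZmodType K} (u : V1) (v : V2) (y : V3) (C : K) :
  `|y| <= C * `|u| * `|v| -> rn y <= rn C * rn u * rn v.
Proof.
move=> h.
have w0 : 0 <= C * `|u| * `|v| by apply: le_trans h; exact: normr_ge0.
rewrite -(ger0_norm w0) !normrM !normr_id in h.
by rewrite -lecR !CM -!rnE.
Qed.

Lemma ract_bnd : exists2 C : R, 0 <= C & forall x a, rn (ract M x a) <= C * rn x * rn a.
Proof.
have [C hC] := ract_bounded M; exists (rn C); first exact: rn_ge0.
move=> x a; exact: bnd_real (hC x a).
Qed.

Lemma lact_bnd : exists2 C : R, 0 <= C & forall a x, rn (lact M a x) <= C * rn a * rn x.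
Proof.
have [C hC] := lact_bounded M; exists (rn C); first exact: rn_ge0.
move=> a x; exact: bnd_real (hC a x).
Qed.

Lemma dl_elem (a : A) (f : dual X) : dual_elem (fun x => f (ract M x a)).
Proof.
have [C C0 hC] := ract_bnd; case: (dualP f) => fD fZ _.
apply: (@de_lin _ _ _ (opn f * C * rn a)) => [x y|k x|x].
- by rewrite ractDl fD.
- by rewrite ractZl fZ.
- apply: (le_trans (opn_ub (dualP f) _)).
  have f0 := opn_ge0 (dualP f).
  rewrite -!mulrA ler_wpM2l //.
  apply: (le_trans (hC x a)).
  by rewrite le_eqVlt; apply/orP; left; apply/eqP; ring.
Qed.

Lemma dr_elem (a : A) (f : dual X) : dual_elem (fun x => f (lact M a x)).
Proof.
have [C C0 hC] := lact_bnd; case: (dualP f) => fD fZ _.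
apply: (@de_lin _ _ _ (opn f * C * rn a)) => [x y|k x|x].
- by rewrite lactDr fD.
- by rewrite lactZr fZ.
- apply: (le_trans (opn_ub (dualP f) _)).
  have f0 := opn_ge0 (dualP f).
  rewrite -!mulrA ler_wpM2l //.
  apply: (le_trans (hC a x)).
  by rewrite le_eqVlt; apply/orP; left; apply/eqP; ring.
Qed.

Definition dl (a : A) (f : dual X) : dual X := Dual (dl_elem a f).
Definition dr (f : dual X) (a : A) : dual X := Dual (dr_elem a f).

Lemma dl_bnd : exists C : K, forall a f, `|dl a f| <= C * `|a| * `|f|.
Proof.
have [C C0 hC] := ract_bnd; exists C%:C => a f.
rewrite !dnormE rnE -!CM lecR; apply: opn_le.
  by have f0 := opn_ge0 (dualP f); rewrite !mulr_ge0 ?rn_ge0.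
move=> x /=; apply: (le_trans (opn_ub (dualP f) _)).
rewrite mulrC; apply: le_trans (ler_wpM2r (opn_ge0 (dualP f)) (hC x a)) _.
by rewrite le_eqVlt; apply/orP; left; apply/eqP; ring.
Qed.

Lemma dr_bnd : exists C : K, forall f a, `|dr f a| <= C * `|f| * `|a|.
Proof.
have [C C0 hC] := lact_bnd; exists C%:C => f a.
rewrite !dnormE rnE -!CM lecR; apply: opn_le.
  by have f0 := opn_ge0 (dualP f); rewrite !mulr_ge0 ?rn_ge0.
move=> x /=; apply: (le_trans (opn_ub (dualP f) _)).
rewrite mulrC; apply: le_trans (ler_wpM2r (opn_ge0 (dualP f)) (hC a x)) _.
by rewrite le_eqVlt; apply/orP; left; apply/eqP; ring.
Qed.

Definition dmod : banach_bimodule BA (dualC X).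
Proof.
refine (@BanachBimodule R A BA (dualC X) dl dr _ _ _ _ _ _ _ _ _ _ _ dl_bnd dr_bnd).
- move=> a b f; apply: dual_eq => x /=; case: (dualP f) => fD _ _.
  by rewrite ractDr fD.
- by move=> a f g; apply: dual_eq => x.
- move=> k a f; apply: dual_eq => x /=; case: (dualP f) => _ fZ _.
  by rewrite ractZr fZ.
- by move=> a k f; apply: dual_eq => x.
- by move=> f g a; apply: dual_eq => x.
- move=> f a b; apply: dual_eq => x /=; case: (dualP f) => fD _ _.
  by rewrite lactDl fD.
- by move=> k f a; apply: dual_eq => x.
- move=> k f a; apply: dual_eq => x /=; case: (dualP f) => _ fZ _.
  by rewrite lactZl fZ.
- by move=> a b f; apply: dual_eq => x /=; rewrite ractA.
- by move=> f a b; apply: dual_eq => x /=; rewrite lactA.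
- by move=> a f b; apply: dual_eq => x /=; rewrite lractA.
Defined.

Lemma dmod_lact a f : lact dmod a f = dl a f. Proof. by []. Qed.
Lemma dmod_ract f a : ract dmod f a = dr f a. Proof. by []. Qed.

End DualModule.

Section Main1.
Variable R : realType.
Local Notation K := (R[i]).
Variables (A : completeNormedModType K) (BA : banach_algebra A).

Lemma dual_norm_ub (X : completeNormedModType K) (f : dualC X) x : `|f x| <= `|f| * `|x|.
Proof. by rewrite dnormE !rnE -CM lecR; apply: opn_ub; exact: dualP. Qed.

Lemma ii_iii : approx_semi_amenable BA -> wstar_approx_semi_amenable BA.
Proof.
move=> H X M D Dd Dc; have [I [le [f [g [dI fg conv]]]]] := H X M D Dd Dc.
exists I, le, f, g; split => // a x e e0.
have [er [ep eE]] : exists er, 0 < er /\ e = er%:C.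
  by have [h1 h2] := gt0K e0; exists (complex.Re e).
subst e.
have x1 : 0 < rn x + 1 by rewrite ltr_wpDl ?rn_ge0.
have [i0 hi0] := conv a ((er / (rn x + 1))%:C) ltac:(by rewrite ltcR divr_gt0).
exists i0 => i /hi0 /(_ x) /= h.
rewrite rnE ltcR; move: h; rewrite rnE [`|x|]rnE -CM lecR => h.
apply: (le_lt_trans h).
by rewrite mulrAC ltr_pdivrMr // ltr_pM2l // ltrDl.
Qed.

Lemma i_ii : approx_semi_contractible BA -> approx_semi_amenable BA.
Proof.
move=> H X M D [Del DD DZ DL] Dc.
pose Dd a : dualC X := Dual (Del a).
have der : derivation (dmod M) Dd.
  split.
  - by move=> a b; apply: dual_eq => x /=; rewrite DD.
  - by move=> k a; apply: dual_eq => x /=; rewrite DZ.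
  - by move=> a b; apply: dual_eq => x /=; rewrite DL.
have cont : continuous Dd.
  move=> a; apply/cvgrPdist_lt => e e0.
  have [er [ep eE]] : exists er, 0 < er /\ e = er%:C.
    by have [h1 h2] := gt0K e0; exists (complex.Re e).
  subst e.
  have e2 : 0 < er / 2 by rewrite divr_gt0.
  have [d d0 hd] := Dc a ((er / 2)%:C) ltac:(by rewrite ltcR).
  apply/nbhs_normP; exists d => // b /= hb.
  rewrite distrC in hb; have {}hd := hd b hb.
  rewrite dnormE ltcR; apply: (le_lt_trans (y := er / 2)); last by lra.
  apply: opn_le; first exact: ltW.
  move=> x /=; rewrite rnB; have := hd x; rewrite /= rnE [`|x|]rnE -CM lecR.
  by [].
have [I [le [xi [eta [dI conv]]]]] := H _ (dmod M) Dd der cont.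
exists I, le, (fun i => dfun (xi i)), (fun i => dfun (eta i)); split => //.
  by move=> i; split; exact: dualP.
move=> a e e0; have [i0 hi0] := conv a e e0; exists i0 => i /hi0 h x.
set phi := lact (dmod M) a (xi i) - ract (dmod M) (eta i) a - Dd a.
change (`|phi x| <= e * `|x|).
apply: (le_trans (dual_norm_ub phi x)).
by apply: ler_wpM2r; [exact: normr_ge0 | exact: ltW].
Qed.

End Main1.

Section Helpers.
Variable R : realType.
Local Notation K := (R[i]).

Lemma cplx_split (a b : R) : a%:C - 'i * b%:C = (a +i* (- b)) :> K.
Proof. by apply/eqP; rewrite eq_complex /=; simpc. Qed.

Lemma cplx_dec (a b : R) : (a +i* b) = a%:C + 'i * b%:C :> K.
Proof. by apply/eqP; rewrite eq_complex /=; simpc. Qed.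

Lemma cplx_id (a b c d : R) :
  (a * c + b * d)%:C - 'i * (a * d - b * c)%:C = (a +i* b) * (c%:C - 'i * d%:C) :> K.
Proof. by apply/eqP; rewrite eq_complex /=; simpc; apply/eqP; ring. Qed.

Lemma ii_sq : 'i * 'i = -1 :> K.
Proof. by rewrite -expr2 sqr_i. Qed.

Lemma rn_sum n (f : 'I_n -> K) : rn (\sum_(k < n) f k) <= \sum_(k < n) rn (f k).
Proof.
elim/big_ind2: _ => //; first by rewrite rn0.
by move=> x1 x2 y1 y2 h1 h2; apply: le_trans (rnD _ _) (lerD h1 h2).
Qed.

Lemma term_le_sum n (f : 'I_n -> R) k : (forall j, 0 <= f j) -> f k <= \sum_(j < n) f j.
Proof. by move=> f0; rewrite (bigD1 k) //= lerDl sumr_ge0. Qed.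

Lemma dsumE (X : completeNormedModType K) n (f : 'I_n -> dualC X) x :
  (\sum_(k < n) f k) x = \sum_(k < n) f k x.
Proof. by elim/big_rec2: _ => //= i y g _ <-. Qed.

Lemma dual_sum (X : completeNormedModType K) (F : X -> K) n (f : 'I_n -> X) :
  dual_elem F -> F (\sum_(k < n) f k) = \sum_(k < n) F (f k).
Proof.
move=> Fd; have F0 := dual0 Fd; case: Fd => FD _ _.
by elim/big_rec2: _ => //= i y g _ <-; rewrite FD.
Qed.

Lemma ev_seq (I : Type) (le : I -> I -> Prop) (T : eqType) (r : seq T)
    (P : T -> I -> Prop) : directed_set le ->
  (forall k, k \in r -> exists i0, forall i, le i0 i -> P k i) ->
  exists i0, forall i, le i0 i -> forall k, k \in r -> P k i.
Proof.
move=> [[i00] _ letr ub]; elim: r => [|t r IH] h.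
  by exists i00 => i _ k.
have [i1 h1] := IH (fun k kr => h k (ltac:(by rewrite in_cons kr orbT))).
have [i2 h2] := h t (mem_head _ _).
have [u [u1 u2]] := ub i1 i2.
exists u => i ui k; rewrite in_cons => /orP[/eqP ->|kr].
  by apply: h2; apply: letr ui.
by apply: h1 => //; apply: letr ui.
Qed.

End Helpers.

Section Claim.
Variable R : realType.
Local Notation K := (R[i]).
Variables (A : completeNormedModType K) (BA : banach_algebra A).
Variables (X : completeNormedModType K) (M : banach_bimodule BA X) (D : A -> X).
Hypothesis Dder : derivation M D.
Variables (I : Type) (le : I -> I -> Prop) (F G : I -> dualC X -> K).
Hypotheses (dI : directed_set le) (FG : forall i, dual_elem (F i) /\ dual_elem (G i)).
Hypothesis conv : forall a (phi : dualC X) (e : R), 0 < e -> exists i0, forall i, le i0 i ->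
  rn (F i (dr M phi a) - G i (dl M a phi) - phi (D a)) < e.

Lemma fctD (T : Type) (W : zmodType) (f g : T -> W) x : (f + g) x = f x + g x.
Proof. by []. Qed.
Lemma fctZ (T : Type) (W : lmodType K) (c : K) (f : T -> W) x : (c *: f) x = c *: f x.
Proof. by []. Qed.

Lemma fctN (T : Type) (W : zmodType) (f : T -> W) x : (- f) x = - f x.
Proof. by []. Qed.

Lemma lact0 a : lact M a 0 = 0.
Proof. by have := lactZr M 0 a 0; rewrite !scale0r. Qed.
Lemma ract0 a : ract M 0 a = 0.
Proof. by have := ractZl M 0 0 a; rewrite !scale0r. Qed.

Section Fixed.
Variable s : seq A.
Variable er : R.
Hypothesis er0 : 0 < er.
Local Notation n := (size s).
Definition a_ (k : 'I_n) := nth 0 s k.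
Local Notation V := ('I_n -> X).
Definition p (z : V) : R := \sum_(j < n) rn (z j).

Lemma pD (u v : V) : p (u + v) <= p u + p v.
Proof. by rewrite /p -big_split; apply: ler_sum => j _; exact: rnD. Qed.

Lemma pZ (t : R) (v : V) : 0 <= t -> p (t%:C *: v) = t * p v.
Proof.
move=> t0; rewrite /p mulr_sumr; apply: eq_bigr => j _.
by rewrite /= rnZ rnCp.
Qed.

Lemma p_ge0 (v : V) : 0 <= p v.
Proof. by apply: sumr_ge0 => j _; exact: rn_ge0. Qed.

Lemma pN (v : V) : p (- v) = p v.
Proof. by apply: eq_bigr => j _; rewrite /= rnN. Qed.

Lemma pi (v : V) : p ('i *: v) = p v.
Proof. by apply: eq_bigr => j _; rewrite /= rnZ rn_i mul1r. Qed.

Definition w (xi eta : X) : V := fun k => lact M (a_ k) xi - ract M eta (a_ k).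
Definition y : V := fun k => D (a_ k).

Lemma wD x1 e1 x2 e2 : w x1 e1 + w x2 e2 = w (x1 + x2) (e1 + e2).
Proof.
apply: funext => k; rewrite /w /= lactDr ractDl.
by rewrite opprD addrACA.
Qed.

Lemma wZ (c : K) xi eta : c *: w xi eta = w (c *: xi) (c *: eta).
Proof. by apply: funext => k; rewrite /w /= lactZr ractZl scalerBr. Qed.

Lemma w00 : w 0 0 = 0.
Proof. by apply: funext => k; rewrite /w /= lact0 ract0 subrr. Qed.

Hypothesis nH : ~ exists xi eta, forall a, a \in s -> rn (lact M a xi - ract M eta a - D a) < er.

Lemma hyp xi eta : er <= p (w xi eta + y).
Proof.
have [//|hlt] := leP er (p (w xi eta + y)).
exfalso; apply: nH; exists (- xi), (- eta) => a ain.
have ks : (index a s < n)%N by rewrite index_mem.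
pose k := Ordinal ks.
have ak : a_ k = a by rewrite /a_ /= nth_index.
apply: le_lt_trans hlt.
have -> : lact M a (- xi) - ract M (- eta) a - D a = - (w xi eta + y) k.
  rewrite -ak /w /y /= -scaleN1r lactZr -(scaleN1r eta) ractZl !scaleN1r.
  by rewrite !opprD !opprK.
rewrite rnN /p; apply: (@term_le_sum _ _ (fun j => rn ((w xi eta + y) j)) k) => j.
exact: rn_ge0.
Qed.

Definition G0 : set (V * R) := [set vr | exists xi eta (t : R), vr = (w xi eta + t%:C *: y, t * er)].

Lemma G0lin : glin G0.
Proof.
split.
- move=> v1 r1 v2 r2 [x1 [e1 [t1 E1]]] [x2 [e2 [t2 E2]]].
  case: E1 => -> ->; case: E2 => -> ->.
  exists (x1 + x2), (e1 + e2), (t1 + t2); congr (_, _); last by rewrite mulrDl.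
  by rewrite CD scalerDl addrACA wD.
- move=> v r t [x [e [u E]]]; case: E => -> ->.
  exists (t%:C *: x), (t%:C *: e), (t * u); congr (_, _); last by rewrite mulrA.
  by rewrite scalerDr wZ scalerA CM.
Qed.

Lemma G0dom : gdom p G0.
Proof.
move=> v r [x [e [t E]]]; case: E => -> ->.
have [t0|t0] := leP t 0.
  by apply: le_trans (p_ge0 _); rewrite mulr_le0_ge0 // ltW.
have -> : w x e + t%:C *: y = t%:C *: (w (t^-1%:C *: x) (t^-1%:C *: e) + y).
  by rewrite scalerDr -wZ scalerA -CM mulfV ?gt_eqF // scale1r.
have t0' : 0 <= t := ltW t0.
by rewrite pZ // ler_pM2l //; exact: hyp.
Qed.

Lemma G00 : G0 (0, 0).
Proof. by exists 0, 0, 0; rewrite w00 scale0r addr0 mul0r. Qed.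

Lemma claim_false : False.
Proof.
have [Gm [G0G linG domG totG]] := hahn_banach pD pZ G0lin G0dom G00.
pose Phi (v : V) : R := projT1 (cid (totG v)).
have PhiG v : Gm (v, Phi v) := projT2 (cid (totG v)).
have Phi_add u v : Phi (u + v) = Phi u + Phi v.
  exact: (gfun pZ linG domG (PhiG (u + v)) (linG.1 _ _ _ _ (PhiG u) (PhiG v))).
have Phi_sc (t : R) v : Phi (t%:C *: v) = t * Phi v.
  exact: (gfun pZ linG domG (PhiG _) (linG.2 _ _ t (PhiG v))).
have Phi_le v : Phi v <= p v by apply: domG; exact: PhiG.
have Phi_N v : Phi (- v) = - Phi v.
  by rewrite -scaleN1r -C1 -CN Phi_sc mulN1r.
have Phi_w xi eta : Phi (w xi eta) = 0.
  apply: (gfun pZ linG domG (PhiG _)); apply: G0G.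
  by exists xi, eta, 0; rewrite scale0r addr0 mul0r.
have Phi_y : Phi y = er.
  apply: (gfun pZ linG domG (PhiG _)); apply: G0G.
  by exists 0, 0, 1; rewrite w00 add0r mul1r scale1r.
have Phi_abs v : `|Phi v| <= p v.
  rewrite ler_norml Phi_le andbT -pN lerNl -Phi_N; exact: Phi_le.
pose Psi (v : V) : K := (Phi v)%:C - 'i * (Phi ('i *: v))%:C.
have Psi_add u v : Psi (u + v) = Psi u + Psi v.
  rewrite /Psi scalerDr !Phi_add !CD mulrDr.
  by rewrite opprD addrACA.
have Psi0 : Psi 0 = 0.
  by apply: (addrI (Psi 0)); rewrite -Psi_add !addr0.
have Psi_sc (c : K) v : Psi (c *: v) = c * Psi v.
  case: c => a b.
  have ii v' : 'i *: ('i *: v') = - v' :> V by rewrite scalerA ii_sq scaleN1r.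
  have E : (a +i* b) *: v = a%:C *: v + b%:C *: ('i *: v).
    by rewrite cplx_dec scalerDl -scalerA scalerA mulrC -scalerA.
  have c1 : 'i *: (a%:C *: v) = a%:C *: ('i *: v) by rewrite !scalerA mulrC.
  have c2 : 'i *: (b%:C *: ('i *: v)) = (- b)%:C *: v.
    by rewrite scalerA mulrC -scalerA ii CN scaleNr scalerN.
  by rewrite /Psi E scalerDr c1 c2 !Phi_add !Phi_sc -cplx_id mulNr.
have Psi_N v : Psi (- v) = - Psi v.
  by rewrite -scaleN1r Psi_sc mulN1r.
have Psi_w xi eta : Psi (w xi eta) = 0.
  by rewrite /Psi wZ !Phi_w mulr0 subrr.
have Psi_bnd v : rn (Psi v) <= 2 * p v.
  rewrite /Psi cplx_split; apply: le_trans (rn_le_ReIm _) _ => /=.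
  rewrite normrN mulr2n mulrDl mul1r; apply: lerD => //.
  by rewrite -(pi v).
pose delta (k : 'I_n) (x : X) : V := fun j => if k == j then x else 0.
have delta_sum (g : 'I_n -> X) : \sum_(k < n) delta k (g k) = g.
  apply: funext => j; rewrite fct_sumE /delta.
  by rewrite -big_mkcond /= big_pred1_eq.
have Psi_sum (f : 'I_n -> V) : Psi (\sum_(k < n) f k) = \sum_(k < n) Psi (f k).
  by elim/big_rec2: _ => //= i u g _ <-; rewrite Psi_add.
have phi_elem k : dual_elem (fun x => Psi (delta k x)).
  apply: (@de_lin _ _ _ (2 * n%:R)) => [x1 x2|c x|x].
  - rewrite -Psi_add; congr Psi; apply: funext => j; rewrite /delta /=.
    by rewrite fctD; case: (k == j); rewrite ?addr0.
  - rewrite -Psi_sc; congr Psi; apply: funext => j; rewrite /delta /=.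
    by rewrite fctZ; case: (k == j); rewrite ?scaler0.
  - apply: (le_trans (Psi_bnd _)); rewrite -mulrA ler_wpM2l //.
    have -> : n%:R * rn x = \sum_(j < n) rn x.
      by rewrite sumr_const card_ord mulr_natl.
    apply: ler_sum => j _; rewrite /delta; case: (k == j) => //.
    by rewrite rn0 rn_ge0.
pose phis k : dualC X := Dual (phi_elem k).
have sum_dr : \sum_(k < n) dr M (phis k) (a_ k) = 0.
  apply: dual_eq => x; rewrite dsumE dzeroE /=.
  rewrite -Psi_sum delta_sum.
  have -> : (fun k => lact M (a_ k) x) = w x 0.
    by apply: funext => k; rewrite /w ract0 subr0.
  exact: Psi_w.
have sum_dl : \sum_(k < n) dl M (a_ k) (phis k) = 0.
  apply: dual_eq => x; rewrite dsumE dzeroE /=.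
  rewrite -Psi_sum delta_sum.
  have -> : (fun k => ract M x (a_ k)) = - w 0 x.
    by apply: funext => k; rewrite fctN /w lact0 sub0r opprK.
  by rewrite Psi_N Psi_w oppr0.
have sum_D : \sum_(k < n) phis k (D (a_ k)) = Psi y.
  by rewrite /= -Psi_sum delta_sum.
set e' := er / (n%:R + 1).
have n1 : 0 < n%:R + 1 :> R by rewrite ltr_wpDl.
have e'0 : 0 < e' by rewrite divr_gt0.
have [i0 hi0] := @ev_seq I le _ (enum 'I_n)
  (fun k i => rn (F i (dr M (phis k) (a_ k)) - G i (dl M (a_ k) (phis k))
                  - phis k (D (a_ k))) < e') dI
  (fun k _ => conv (a_ k) (phis k) e'0).
have hk k : rn (F i0 (dr M (phis k) (a_ k)) - G i0 (dl M (a_ k) (phis k))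
                  - phis k (D (a_ k))) < e'.
  by apply: hi0; [case: dI => _ r _ _; exact: r | rewrite mem_enum].
have [Fd Gd] := FG i0.
have sumT : \sum_(k < n) (F i0 (dr M (phis k) (a_ k)) - G i0 (dl M (a_ k) (phis k))
                  - phis k (D (a_ k))) = - Psi y.
  have E : \sum_(k < n) (F i0 (dr M (phis k) (a_ k)) - G i0 (dl M (a_ k) (phis k))
                  - phis k (D (a_ k))) = \sum_(k < n) F i0 (dr M (phis k) (a_ k))
      - \sum_(k < n) G i0 (dl M (a_ k) (phis k)) - \sum_(k < n) phis k (D (a_ k)).
    by rewrite !sumrB.
  rewrite E -(dual_sum _ Fd) -(dual_sum _ Gd) sum_dr sum_dl sum_D.
  by rewrite (dual0 Fd) (dual0 Gd) subrr sub0r.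
have h1 : er <= rn (Psi y).
  have := Re_le (Psi y); rewrite /Psi cplx_split /= Phi_y.
  by rewrite ger0_norm // ltW.
have h2 : rn (Psi y) <= n%:R * e'.
  rewrite -rnN -sumT; apply: le_trans (rn_sum _) _.
  have -> : n%:R * e' = \sum_(k < n) e' by rewrite sumr_const card_ord mulr_natl.
  by apply: ler_sum => k _; exact: ltW.
have h3 : n%:R * e' < er.
  rewrite /e' mulrA ltr_pdivrMr // mulrDr mulr1 mulrC ltrDl //.
by have := le_lt_trans (le_trans h1 h2) h3; rewrite ltxx.
Qed.

End Fixed.

Lemma claim (s : seq A) (er : R) : 0 < er ->
  exists xi eta, forall a, a \in s -> rn (lact M a xi - ract M eta a - D a) < er.
Proof.
move=> er0; have [//|nH] := pselect (exists xi eta, forall a, a \in s ->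
  rn (lact M a xi - ract M eta a - D a) < er).
exfalso; exact: (claim_false er0 nH).
Qed.

End Claim.

Section Main2.
Variable R : realType.
Local Notation K := (R[i]).
Variables (A : completeNormedModType K) (BA : banach_algebra A).

Lemma iii_i : wstar_approx_semi_amenable BA -> approx_semi_contractible BA.
Proof.
move=> H X M D Dder Dc.
have [DD DZ DL] := Dder.
pose Dt (a : A) (phi : dualC X) : K := phi (D a).
have Dt_elem a : dual_elem (Dt a).
  apply: (@de_lin _ (dualC X) (Dt a) (rn (D a))) => [f g|k f|f] //.
  by rewrite mulrC; exact: (opn_ub (dualP f)).
have Dd : dual_derivation (dmod M) Dt.
  split.
  - exact: Dt_elem.
  - by move=> a b f; rewrite /Dt DD; case: (dualP f) => fD _ _; exact: fD.
  - by move=> k a f; rewrite /Dt DZ; case: (dualP f) => _ fZ _; exact: fZ.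
  - by move=> a b f; rewrite /Dt DL; case: (dualP f) => fD _ _; rewrite fD.
have Dc' : dual_continuous Dt.
  move=> a e e0.
  have [er [ep eE]] : exists er, 0 < er /\ e = er%:C.
    by have [h1 h2] := gt0K e0; exists (complex.Re e).
  subst e.
  have h := (cvgrPdist_lt _ _).1 (Dc a) er%:C e0.
  have {}h := h (nbhs_filter a).
  have [d /= d0 hd] := iffLR (nbhs_normP _ _) h.
  exists d => // b hb f.
  rewrite distrC in hb; have {}hd := hd b hb.
  rewrite /Dt /=.
  have -> : f (D b) - f (D a) = f (D b - D a).
    by case: (dualP f) => fD fZ _; apply/esym; rewrite fD -[- D a]scaleN1r fZ mulN1r.
  apply: (le_trans (dual_norm_ub f _)); rewrite mulrC.
  by apply: ler_wpM2r; [exact: normr_ge0 | rewrite distrC; exact: ltW].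
have [I [le [F [G [dI FG conv]]]]] := H _ (dmod M) Dt Dd Dc'.
have conv' : forall a (phi : dualC X) (e : R), 0 < e -> exists i0, forall i, le i0 i ->
    rn (F i (dr M phi a) - G i (dl M a phi) - phi (D a)) < e.
  move=> a phi e e0; have [i0 hi0] := conv a phi e%:C ltac:(by rewrite ltcR).
  by exists i0 => i /hi0; rewrite rnE ltcR.
have cl := claim dI FG conv'.
pose J := (seq A * nat)%type.
pose leJ (j1 j2 : J) := {subset j1.1 <= j2.1} /\ (j1.2 <= j2.2)%N.
pose er (j : J) : R := (j.2.+1%:R)^-1.
have er0 j : 0 < er j by rewrite /er invr_gt0 ltr0n.
have ex j : exists xe : X * X, forall a, a \in j.1 ->
    rn (lact M a xe.1 - ract M xe.2 a - D a) < er j.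
  by have [xi [eta h]] := cl j.1 (er j) (er0 j); exists (xi, eta).
pose xe j := projT1 (cid (ex j)).
have xeP j := projT2 (cid (ex j)).
exists J, leJ, (fun j => (xe j).1), (fun j => (xe j).2); split.
  split.
  - by constructor; exact: ([::], 0%N).
  - by move=> j; split.
  - move=> j1 j2 j3 [s12 n12] [s23 n23]; split; first by move=> x /s12 /s23.
    exact: leq_trans n23.
  - move=> j1 j2; exists (j1.1 ++ j2.1, maxn j1.2 j2.2); split; split => /=.
    + by move=> x xs; rewrite mem_cat xs.
    + exact: leq_maxl.
    + by move=> x xs; rewrite mem_cat xs orbT.
    + exact: leq_maxr.
move=> a e e0.
have [er' [ep eE]] : exists er, 0 < er /\ e = er%:C.
  by have [h1 h2] := gt0K e0; exists (complex.Re e).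
subst e.
pose N := Num.truncn (er'^-1).
have hN : er'^-1 < N.+1%:R := Num.Theory.truncnS_gt _.
have hN' : (N.+1%:R)^-1 < er'.
  rewrite -[X in _ < X]invrK ltf_pV2 ?posrE ?ltr0n ?invr_gt0 //.
exists ([:: a], N) => j [sj nj].
have aj : a \in j.1 by apply: sj; rewrite mem_head.
rewrite rnE ltcR; apply: (lt_trans (xeP j a aj)).
apply: le_lt_trans hN'.
by rewrite /er lef_pV2 ?posrE ?ltr0n // ler_nat ltnS.
Qed.

End Main2.

Theorem theorem2p11 (R : realType) (A : completeNormedModType (R[i]))
    (BA : banach_algebra A) :
  (approx_semi_contractible BA <-> approx_semi_amenable BA) /\
  (approx_semi_amenable BA <-> wstar_approx_semi_amenable BA).
Proof.
split; split.
- exact: i_ii.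
- by move=> h; apply: iii_i; apply: ii_iii.
- exact: ii_iii.
- by move=> h; apply: i_ii; apply: iii_i.
Qed.
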